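(* Let $T=(\{T_g\}_{g\in G},\{\gamma_{g,h}\}_{g,h\in G},u)$ be an action of a group $G$ on a semigroupal category $\mathcal{C}$, let $\mathcal{I}$ be an ideal of $\mathcal{C}$, and for each $g\in G$ put $\mathcal{C}_g=\mathcal{I}\cap\overline{T_g(\mathcal{I})}$. Then $\overline{T_g(\mathcal{C}_{g^{-1}})}=\mathcal{C}_g$ for all $g\in G$.
   Context: A semigroupal category is a (strict) category with a tensor product functor and associator satisfying the pentagon axiom. An action of a group $G$ (unit $e$) on $\mathcal{C}$ consists of semigroupal auto-equivalences $T_g$ of $\mathcal{C}$, natural isomorphisms of semigroupal functors $\gamma_{g,h}\colon T_gT_h\Rightarrow T_{gh}$ and $u\colon\mathrm{Id}_{\mathcal{C}}\Rightarrow T_e$, with $(\gamma_{gh,k})_X\circ(\gamma_{g,h})_{T_k(X)}=(\gamma_{g,hk})_X\circ T_g((\gamma_{h,k})_X)$, and with $u_{T_g(X)}$, $(\gamma_{e,g})_X$ mutually inverse and $T_g(u_X)$, $(\gamma_{g,e})_X$ mutually inverse. For a subcategory $\mathcal{D}$, $\overline{\mathcal{D}}$ denotes the smallest subcategory of $\mathcal{C}$ containing $\mathcal{D}$ and closed under isomorphisms. An ideal of $\mathcal{C}$ is a subcategory closed under isomorphisms such that $X\otimes Y$ and $Y\otimes X$ are objects of it whenever $X$ is an object of it and $Y$ is any object of $\mathcal{C}$. *)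

(* Defs.v *)
Set Implicit Arguments.
Unset Strict Implicit.

Record Grp := {
  gcar :> Type;
  gmul : gcar -> gcar -> gcar;
  gone : gcar;
  ginv : gcar -> gcar;
  gmulA : forall x y z, gmul x (gmul y z) = gmul (gmul x y) z;
  gmul1g : forall x, gmul gone x = x;
  gmulg1 : forall x, gmul x gone = x;
  gmulVg : forall x, gmul (ginv x) x = gone;
  gmulgV : forall x, gmul x (ginv x) = gone }.
Arguments gmul {g}.
Arguments gone {g}.
Arguments ginv {g}.

Record Category := {
  Ob :> Type;
  Hom : Ob -> Ob -> Type;
  idm : forall X, Hom X X;
  comp : forall X Y Z, Hom Y Z -> Hom X Y -> Hom X Z;
  comp_idl : forall X Y (f : Hom X Y), comp (idm Y) f = f;
  comp_idr : forall X Y (f : Hom X Y), comp f (idm X) = f;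
  comp_assoc : forall X Y Z W (h : Hom Z W) (g : Hom Y Z) (f : Hom X Y),
      comp h (comp g f) = comp (comp h g) f }.
Arguments Hom {c}.
Arguments idm {c}.
Arguments comp {c X Y Z}.

Definition mutually_inverse (C : Category) (X Y : C) (f : Hom X Y) (g : Hom Y X) :=
  comp g f = idm X /\ comp f g = idm Y.

Definition is_iso (C : Category) (X Y : C) (f : Hom X Y) :=
  exists g : Hom Y X, mutually_inverse f g.

Record SemigroupalCat := {
  cat :> Category;
  tens : cat -> cat -> cat;
  tensm : forall X X' Y Y', Hom X X' -> Hom Y Y' -> Hom (tens X Y) (tens X' Y');
  tensm_id : forall X Y, tensm (idm X) (idm Y) = idm (tens X Y);
  tensm_comp : forall X X' X'' Y Y' Y'' (f : Hom X' X'') (f' : Hom X X')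
      (g : Hom Y' Y'') (g' : Hom Y Y'),
      tensm (comp f f') (comp g g') = comp (tensm f g) (tensm f' g');
  assoc : forall X Y Z, Hom (tens (tens X Y) Z) (tens X (tens Y Z));
  assoc_iso : forall X Y Z, is_iso (assoc X Y Z);
  assoc_nat : forall X X' Y Y' Z Z' (f : Hom X X') (g : Hom Y Y') (h : Hom Z Z'),
      comp (assoc X' Y' Z') (tensm (tensm f g) h)
      = comp (tensm f (tensm g h)) (assoc X Y Z);
  pentagon : forall X Y Z W,
      comp (assoc X Y (tens Z W)) (assoc (tens X Y) Z W)
      = comp (tensm (idm X) (assoc Y Z W))
          (comp (assoc X (tens Y Z) W) (tensm (assoc X Y Z) (idm W))) }.
Arguments tens {s}.
Arguments tensm {s X X' Y Y'}.
Arguments assoc {s}.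

Record Functor (C : Category) := {
  fob : C -> C;
  fmor : forall X Y, Hom X Y -> Hom (fob X) (fob Y);
  fmor_id : forall X, fmor (idm X) = idm (fob X);
  fmor_comp : forall X Y Z (g : Hom Y Z) (f : Hom X Y),
      fmor (comp g f) = comp (fmor g) (fmor f) }.
Arguments fob {C}.
Arguments fmor {C f X Y} : rename.

Definition natural (C : Category) (F G : C -> C)
    (Fm : forall X Y, Hom X Y -> Hom (F X) (F Y))
    (Gm : forall X Y, Hom X Y -> Hom (G X) (G Y))
    (a : forall X, Hom (F X) (G X)) :=
  forall X Y (f : Hom X Y), comp (a Y) (Fm X Y f) = comp (Gm X Y f) (a X).

Definition natural_iso (C : Category) (F G : C -> C)
    (Fm : forall X Y, Hom X Y -> Hom (F X) (F Y))
    (Gm : forall X Y, Hom X Y -> Hom (G X) (G Y))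
    (a : forall X, Hom (F X) (G X)) :=
  natural Fm Gm a /\ forall X, is_iso (a X).

Definition is_equivalence (C : Category) (F : Functor C) :=
  exists H : Functor C,
    (exists eta : forall X, Hom X (fob H (fob F X)),
        natural_iso (fun X Y f => f) (fun X Y f => fmor (fmor f)) eta) /\
    (exists eps : forall X, Hom (fob F (fob H X)) X,
        natural_iso (fun X Y f => fmor (fmor f)) (fun X Y f => f) eps).

Record SFunctor (C : SemigroupalCat) := {
  sfun :> Functor C;
  sJ : forall X Y, Hom (tens (fob sfun X) (fob sfun Y)) (fob sfun (tens X Y));
  sJ_iso : forall X Y, is_iso (sJ X Y);
  sJ_nat : forall X X' Y Y' (f : Hom X X') (g : Hom Y Y'),
      comp (sJ X' Y') (tensm (fmor f) (fmor g)) = comp (fmor (tensm f g)) (sJ X Y);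
  sJ_assoc : forall X Y Z,
      comp (fmor (assoc X Y Z))
        (comp (sJ (tens X Y) Z) (tensm (sJ X Y) (idm (fob sfun Z))))
      = comp (sJ X (tens Y Z))
          (comp (tensm (idm (fob sfun X)) (sJ Y Z))
                (assoc (fob sfun X) (fob sfun Y) (fob sfun Z))) }.
Arguments sJ {C s}.

(* a : F o G => H is a natural isomorphism of semigroupal functors, where
   F o G carries the composite structure  F(J^G_{X,Y}) o J^F_{GX,GY}. *)
Definition snat_iso_comp (C : SemigroupalCat) (F G H : SFunctor C)
    (a : forall X, Hom (fob F (fob G X)) (fob H X)) :=
  natural_iso (fun X Y f => fmor (fmor f)) (fun X Y f => fmor f) a /\
  forall X Y,
    comp (a (tens X Y)) (comp (fmor (sJ X Y)) (sJ (fob G X) (fob G Y)))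
    = comp (sJ X Y) (tensm (a X) (a Y)).

Arguments snat_iso_comp {C} F G H a.

(* u : Id => F is a natural isomorphism of semigroupal functors, where Id
   carries the identity structure J = id. *)
Definition snat_iso_id (C : SemigroupalCat) (F : SFunctor C)
    (u : forall X, Hom X (fob F X)) :=
  natural_iso (fun X Y f => f) (fun X Y f => fmor f) u /\
  forall X Y, comp (u (tens X Y)) (idm (tens X Y)) = comp (sJ X Y) (tensm (u X) (u Y)).

Arguments snat_iso_id {C} F u.

Definition castH (G : Grp) (C : Category) (A : C) (P : G -> C) (a b : G)
    (e : a = b) (f : Hom A (P a)) : Hom A (P b) :=
  match e in _ = c return Hom A (P c) with eq_refl => f end.

Record GroupAction (G : Grp) (C : SemigroupalCat) := {
  T : G -> SFunctor C;
  T_equiv : forall g, is_equivalence (T g);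
  gam : forall g h X, Hom (fob (T g) (fob (T h) X)) (fob (T (gmul g h)) X);
  gam_iso : forall g h, snat_iso_comp (T g) (T h) (T (gmul g h)) (gam g h);
  u : forall X, Hom X (fob (T gone) X);
  u_iso : snat_iso_id (T gone) u;
  gam_coh : forall g h k X,
      comp (gam (gmul g h) k X) (gam g h (fob (T k) X))
      = castH (P := fun c => fob (T c) X) (gmulA g h k)
          (comp (gam g (gmul h k) X) (fmor (gam h k X)));
  unit_l : forall g X,
      mutually_inverse (u (fob (T g) X))
        (castH (P := fun c => fob (T c) X) (gmul1g g) (gam gone g X));
  unit_r : forall g X,
      mutually_inverse (fmor (u X))
        (castH (P := fun c => fob (T c) X) (gmulg1 g) (gam g gone X)) }.
Arguments T {G C}.

Record SubColl (C : Category) := {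
  sob : C -> Prop;
  smor : forall X Y : C, Hom X Y -> Prop }.
Arguments sob {C}.
Arguments smor {C} s {X Y}.

Definition is_subcat (C : Category) (D : SubColl C) :=
  (forall X Y (f : Hom X Y), smor D f -> sob D X /\ sob D Y) /\
  (forall X, sob D X -> smor D (idm X)) /\
  (forall X Y Z (g : Hom Y Z) (f : Hom X Y), smor D g -> smor D f -> smor D (comp g f)).

Definition iso_closed (C : Category) (D : SubColl C) :=
  forall X Y (f : Hom X Y), sob D X -> is_iso f -> sob D Y /\ smor D f.

Definition contained (C : Category) (D E : SubColl C) :=
  (forall X, sob D X -> sob E X) /\
  (forall X Y (f : Hom X Y), smor D f -> smor E f).

Definition same_subcat (C : Category) (D E : SubColl C) :=
  contained D E /\ contained E D.

(* \overline{D}: smallest subcategory containing D closed under isomorphisms *)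
Definition closure (C : Category) (D : SubColl C) : SubColl C := {|
  sob := fun X => forall S : SubColl C,
           is_subcat S -> iso_closed S -> contained D S -> sob S X;
  smor := fun X Y f => forall S : SubColl C,
           is_subcat S -> iso_closed S -> contained D S -> smor S f |}.

Definition inter (C : Category) (D E : SubColl C) : SubColl C := {|
  sob := fun X => sob D X /\ sob E X;
  smor := fun X Y f => smor D f /\ smor E f |}.

Inductive img_mor (C : Category) (F : Functor C) (D : SubColl C)
    : forall A B : C, Hom A B -> Prop :=
  | img_mor_in : forall X Y (f : Hom X Y), smor D f -> img_mor F D (@fmor C F X Y f).

Definition image (C : Category) (F : Functor C) (D : SubColl C) : SubColl C := {|
  sob := fun A => exists X, sob D X /\ A = fob F X;
  smor := fun A B h => img_mor F D h |}.

Definition is_ideal (C : SemigroupalCat) (I : SubColl C) :=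
  is_subcat I /\ iso_closed I /\
  forall X Y : C, sob I X -> sob I (tens X Y) /\ sob I (tens Y X).

Definition Cg (G : Grp) (C : SemigroupalCat) (A : GroupAction G C)
    (I : SubColl C) (g : G) : SubColl C :=
  inter I (closure (image (T A g) I)).

(* Main.v *)
Require Import Defs.
From Stdlib Require Import Setoid.

Lemma iso_inv_iso (C : Category) (X Y : C) (f : Hom X Y) (g : Hom Y X) :
  mutually_inverse f g -> is_iso g.
Proof. intros [H1 H2]. exists f. split; assumption. Qed.

Arguments iso_inv_iso {C X Y f g}.

Lemma transfer (C : Category) (S : SubColl C) (HS : is_subcat S) (HSi : iso_closed S)
  (F G : C -> C) Fm Gm a (Ha : @natural_iso C F G Fm Gm a) :
  (forall X, sob S (F X) <-> sob S (G X)) /\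
  (forall X Y (h : Hom X Y), smor S (Fm X Y h) <-> smor S (Gm X Y h)).
Proof.
  destruct Ha as [Hn Hi]. destruct HS as [H1 [H2 H3]].
  assert (Ob1 : forall X, sob S (F X) -> sob S (G X)).
  { intros X HX. exact (proj1 (HSi _ _ _ HX (Hi X))). }
  assert (Ob2 : forall X, sob S (G X) -> sob S (F X)).
  { intros X HX. destruct (Hi X) as [b Hb].
    exact (proj1 (HSi _ _ _ HX (iso_inv_iso Hb))). }
  split; [intros; split; auto|].
  intros X Y h. destruct (Hi X) as [bX HbX]. destruct (Hi Y) as [bY HbY].
  split; intro Hh.
  - destruct (H1 _ _ _ Hh) as [SX SY].
    assert (E : Gm X Y h = comp (comp (a Y) (Fm X Y h)) bX).
    { rewrite Hn. rewrite <- comp_assoc. destruct HbX as [_ HbX]. rewrite HbX.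
      now rewrite comp_idr. }
    rewrite E. apply H3; [apply H3|].
    + exact (proj2 (HSi _ _ _ SY (Hi Y))).
    + exact Hh.
    + exact (proj2 (HSi _ _ _ (Ob1 _ SX) (iso_inv_iso HbX))).
  - destruct (H1 _ _ _ Hh) as [SX SY].
    assert (E : Fm X Y h = comp bY (comp (Gm X Y h) (a X))).
    { rewrite <- Hn. rewrite comp_assoc. destruct HbY as [HbY _]. rewrite HbY.
      now rewrite comp_idl. }
    rewrite E. apply H3; [|apply H3].
    + exact (proj2 (HSi _ _ _ SY (iso_inv_iso HbY))).
    + exact Hh.
    + exact (proj2 (HSi _ _ _ (Ob2 _ SX) (Hi X))).
Qed.

Lemma idTT (G : Grp) (C : SemigroupalCat) (A : GroupAction G C) (S : SubColl C)
  (HS : is_subcat S) (HSi : iso_closed S) (m k : G) (e : gmul m k = gone) :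
  (forall X, sob S X <-> sob S (fob (T A m) (fob (T A k) X))) /\
  (forall X Y (h : Hom X Y), smor S h <-> smor S (fmor (f:=T A m) (fmor (f:=T A k) h))).
Proof.
  destruct (@transfer _ _ HS HSi _ _ _ _ _ (proj1 (gam_iso A m k))) as [G1 G2].
  destruct (@transfer _ _ HS HSi _ _ _ _ _ (proj1 (u_iso A))) as [U1 U2].
  cbv beta in *.
  rewrite e in G1, G2.
  split; intros.
  - rewrite G1. apply U1.
  - rewrite G2. apply U2.
Qed.

Lemma closure_subcat (C : Category) (D : SubColl C) : is_subcat (closure D).
Proof.
  split; [|split]; simpl.
  - intros X Y f Hf. split; intros S HS HSi HD; pose proof HS as HS';
      destruct HS' as [H1 _]; apply (H1 _ _ f); apply Hf; auto.
  - intros X HX S HS HSi HD. pose proof HS as HS'. destruct HS' as [_ [H2 _]]. apply H2. apply HX; auto.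
  - intros X Y Z g f Hg Hf S HS HSi HD. pose proof HS as HS'.
    destruct HS' as [_ [_ H3]]. apply H3; auto.
Qed.

Lemma closure_iso (C : Category) (D : SubColl C) : iso_closed (closure D).
Proof.
  intros X Y f HX Hf; simpl; split; intros S HS HSi HD;
    apply (HSi _ _ f (HX S HS HSi HD) Hf).
Qed.

Lemma closure_incl (C : Category) (D : SubColl C) : contained D (closure D).
Proof. split; simpl; intros; apply H2; auto. Qed.

Lemma closure_min (C : Category) (D S : SubColl C) :
  is_subcat S -> iso_closed S -> contained D S -> contained (closure D) S.
Proof. intros; split; simpl; intros; apply H2; auto. Qed.

Lemma inter_subcat (C : Category) (D E : SubColl C) :
  is_subcat D -> is_subcat E -> is_subcat (inter D E).
Proof.
  intros [D1 [D2 D3]] [E1 [E2 E3]]; split; [|split]; simpl.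
  - intros X Y f [Hd He]. destruct (D1 _ _ _ Hd). destruct (E1 _ _ _ He). tauto.
  - intros X [? ?]; auto.
  - intros X Y Z g f [? ?] [? ?]; auto.
Qed.

Lemma inter_iso (C : Category) (D E : SubColl C) :
  iso_closed D -> iso_closed E -> iso_closed (inter D E).
Proof.
  intros HD HE X Y f [? ?] Hf; simpl.
  destruct (HD _ _ _ H Hf). destruct (HE _ _ _ H0 Hf). tauto.
Qed.

Lemma fmor_iso (C : Category) (F : Functor C) (X Y : C) (f : Hom X Y) :
  is_iso f -> is_iso (fmor (f:=F) f).
Proof.
  intros [g [H1 H2]]. exists (fmor (f:=F) g). split.
  - rewrite <- fmor_comp, H1. apply fmor_id.
  - rewrite <- fmor_comp, H2. apply fmor_id.
Qed.

Lemma pre (G : Grp) (C : SemigroupalCat) (A : GroupAction G C) (I : SubColl C)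
  (HS : is_subcat I) (HSi : iso_closed I) (m k : G) (e : gmul m k = gone) :
  contained (closure (image (T A k) I))
    {| sob := fun X => sob I (fob (T A m) X);
       smor := fun X Y f => smor I (fmor (f:=T A m) f) |}.
Proof.
  destruct (@idTT _ _ A _ HS HSi _ _ e) as [O M].
  apply closure_min.
  - destruct HS as [H1 [H2 H3]]. split; [|split]; simpl.
    + intros X Y f Hf. apply H1 in Hf. exact Hf.
    + intros X HX. rewrite fmor_id. auto.
    + intros X Y Z g f Hg Hf. rewrite fmor_comp. auto.
  - intros X Y f HX Hf; simpl. apply (HSi _ _ _ HX (@fmor_iso _ (T A m) _ _ _ Hf)).
  - split; simpl.
    + intros X [Z [HZ ->]]. exact (proj1 (O Z) HZ).
    + intros X Y f Hf. destruct Hf as [X Y f Hf]. exact (proj1 (M _ _ f) Hf).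
Qed.

Theorem corollary3p2 (G : Grp) (C : SemigroupalCat) (A : GroupAction G C)
    (I : SubColl C) (HI : is_ideal I) (g : G) :
  same_subcat (closure (image (T A g) (Cg A I (ginv g)))) (Cg A I g).
Proof.
  destruct HI as [HS [HSi _]].
  split.
  - apply closure_min.
    + apply inter_subcat; auto. apply closure_subcat.
    + apply inter_iso; auto. apply closure_iso.
    + split; simpl.
      * intros X0 [X [[HXI HXcl] ->]]. split.
        -- exact (proj1 (@pre _ _ A _ HS HSi _ _ (gmulgV g)) _ HXcl).
        -- apply closure_incl. simpl. exists X. auto.
      * intros X0 Y0 h Hh. destruct Hh as [X Y f [HfI Hfcl]]. split.
        -- exact (proj2 (@pre _ _ A _ HS HSi _ _ (gmulgV g)) _ _ _ Hfcl).
        -- apply closure_incl. simpl. constructor. exact HfI.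
  - set (K := closure (image (T A g) (Cg A I (ginv g)))).
    destruct (@idTT _ _ A _ (@closure_subcat _ (image (T A g) (Cg A I (ginv g))))
                (@closure_iso _ (image (T A g) (Cg A I (ginv g)))) _ _ (gmulgV g)) as [O M].
    split; simpl.
    + intros X [HXI HXcl]. apply (proj2 (O X)). apply closure_incl. simpl.
      exists (fob (T A (ginv g)) X). split; [split|reflexivity].
      * exact (proj1 (@pre _ _ A _ HS HSi _ _ (gmulVg g)) _ HXcl).
      * apply closure_incl. simpl. exists X. auto.
    + intros X Y f [HfI Hfcl]. apply (proj2 (M _ _ f)). apply closure_incl. simpl.
      constructor. split.
      * exact (proj2 (@pre _ _ A _ HS HSi _ _ (gmulVg g)) _ _ _ Hfcl).
      * apply closure_incl. simpl. constructor. exact HfI.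
Qed.
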